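(* Let $k,a,b$ be positive real numbers and $\{S^{(a,b)}_{k,n}\}_{n\ge0}$ the $k$-FL sequence, and let $\alpha>\beta$ be the roots of $x^2-kx-1$. For any real number $p$ with $p\notin\{0,\alpha,\beta\}$ and any integer $n\ge1$, $\sum_{i=1}^n\frac{S^{(a,b)}_{k,i}}{p^i}=\frac{1}{(p^2-pk-1)p^n}\Big(-S^{(a,b)}_{k,n}-pS^{(a,b)}_{k,n+1}+p^{n+1}(a+bk)+2bp^n\Big)$.
   Context: The $k$-FL sequence (for positive reals $k,a,b$) is $S^{(a,b)}_{k,0}=2b$, $S^{(a,b)}_{k,1}=bk+a$, $S^{(a,b)}_{k,n}=kS^{(a,b)}_{k,n-1}+S^{(a,b)}_{k,n-2}$. *)

(* Defs.v *)
From Stdlib Require Import Reals.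
Open Scope R_scope.

Fixpoint kFL (k a b : R) (n : nat) : R :=
  match n with
  | O => 2 * b
  | S O => b * k + a
  | S ((S m) as m1) => k * kFL k a b m1 + kFL k a b m
  end.

(* Main.v *)
Require Import Defs.
From Stdlib Require Import Reals Lra Lia.
Open Scope R_scope.

Lemma kFL_SS k a b m : kFL k a b (S (S m)) = k * kFL k a b (S m) + kFL k a b m.
Proof. reflexivity. Qed.

Lemma aux (k a b p : R) (m : nat) : p <> 0 ->
  (p ^ 2 - p * k - 1) * p ^ (S m) * sum_f_R0 (fun j => kFL k a b (S j) / p ^ (S j)) m =
  - kFL k a b (S m) - p * kFL k a b (S (S m)) + p ^ (S (S m)) * (a + b * k) + 2 * b * p ^ (S m).
Proof.
  intros Hp. induction m as [|m IH].
  - simpl sum_f_R0. rewrite kFL_SS. simpl. field. exact Hp.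
  - change (sum_f_R0 (fun j => kFL k a b (S j) / p ^ (S j)) (S m)) with
      (sum_f_R0 (fun j => kFL k a b (S j) / p ^ (S j)) m + kFL k a b (S (S m)) / p ^ (S (S m))).
    assert (Hpow : p ^ (S (S m)) <> 0) by (apply pow_nonzero; exact Hp).
    set (s := sum_f_R0 (fun j => kFL k a b (S j) / p ^ (S j)) m) in *.
    replace ((p ^ 2 - p * k - 1) * p ^ S (S m) * (s + kFL k a b (S (S m)) / p ^ S (S m)))
      with (p * ((p ^ 2 - p * k - 1) * p ^ S m * s) + (p ^ 2 - p * k - 1) * kFL k a b (S (S m))).
    2:{ change (p ^ S (S m)) with (p * p ^ (S m)) in *. assert (p ^ S m <> 0) by (apply pow_nonzero; exact Hp). field. split; assumption. }
    rewrite IH. rewrite (kFL_SS k a b (S m)).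
    change (p ^ S (S (S m))) with (p * p ^ (S (S m))).
    change (p ^ S (S m)) with (p * p ^ (S m)). ring.
Qed.

Theorem theorem4p27 (k a b alpha beta p : R) (n : nat) :
  0 < k -> 0 < a -> 0 < b ->
  alpha ^ 2 - k * alpha - 1 = 0 -> beta ^ 2 - k * beta - 1 = 0 -> alpha > beta ->
  p <> 0 -> p <> alpha -> p <> beta ->
  (1 <= n)%nat ->
  sum_f_R0 (fun j => kFL k a b (S j) / p ^ (S j)) (pred n) =
  / ((p ^ 2 - p * k - 1) * p ^ n) *
    (- kFL k a b n - p * kFL k a b (S n) + p ^ (S n) * (a + b * k) + 2 * b * p ^ n).
Proof.
  intros Hk Ha Hb Hal Hbe Hab Hp Hpa Hpb Hn.
  assert (Hsum : alpha + beta = k).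
  { assert ((alpha - beta) * (alpha + beta - k) = 0) by (simpl in *; nra).
    apply Rmult_integral in H as [H|H]; lra. }
  assert (Hprod : alpha * beta = -1).
  { simpl in Hal. rewrite <- Hsum in Hal. nra. }
  assert (HD : p ^ 2 - p * k - 1 <> 0).
  { replace (p ^ 2 - p * k - 1) with ((p - alpha) * (p - beta))
      by (rewrite <- Hsum; simpl; nra).
    apply Rmult_integral_contrapositive; split; intro; apply Hpa || apply Hpb; lra. }
  destruct n as [|m]; [lia|]. simpl pred.
  assert (Hpow : p ^ (S m) <> 0) by (apply pow_nonzero; exact Hp).
  rewrite <- (aux k a b p m Hp). field. split; assumption.
Qed.
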